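(* For any $u,v\in\mathbb{R}^d$, \[ \{\langle u, Bv\rangle : B\in \mathbb{B}^u_d\} = \{\langle u, Bv\rangle : B\in \mathbb{B}_d\} = \big[\langle u^\downarrow, v^\uparrow\rangle,\ \langle u^\downarrow, v^\downarrow\rangle\big]. \]
   Context: $\langle u,v\rangle=\sum_j u_jv_j$ for real vectors. For $u\in\mathbb{R}^d$, $u^\downarrow$ (resp. $u^\uparrow$) is the vector with the same entries rearranged in decreasing (resp. increasing) order. $\mathbb{B}_d$ is the set of $d\times d$ bistochastic (doubly stochastic) matrices: real matrices with nonnegative entries whose rows and columns each sum to $1$. $\mathbb{B}^u_d\subseteq\mathbb{B}_d$ is the set of unistochastic matrices, i.e. matrices of the form $[\,|U_{ij}|^2\,]_{i,j}$ for some $d\times d$ unitary matrix $U$. *)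

(* Defs.v *)
(* The real field R^d is modelled inside an arbitrary
   numClosedFieldType C (e.g. the complex numbers), real vectors being
   C-vectors with real entries; unitaries are C-matrices. *)
From HB Require Import structures.
From mathcomp Require Import all_boot all_order all_algebra.
Set Implicit Arguments. Unset Strict Implicit. Unset Printing Implicit Defensive.
Import Order.TTheory GRing.Theory Num.Theory.
Local Open Scope ring_scope.

Section Defs.
Variable C : numClosedFieldType.

Definition inner (d : nat) (u w : 'cV[C]_d) : C := \sum_(i < d) u i 0 * w i 0.

Definition vdown (d : nat) (u : 'cV[C]_d) : 'cV[C]_d :=
  \col_(i < d) nth 0 (sort (fun x y : C => y <= x) [seq u j 0 | j <- enum 'I_d]) i.
Definition vup (d : nat) (u : 'cV[C]_d) : 'cV[C]_d :=
  \col_(i < d) nth 0 (sort (fun x y : C => x <= y) [seq u j 0 | j <- enum 'I_d]) i.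

Definition real_vec (d : nat) (u : 'cV[C]_d) : Prop := forall i, u i 0 \is Num.real.

Definition bistochastic (d : nat) (B : 'M[C]_d) : Prop :=
  (forall i j, 0 <= B i j) /\
  (forall i, \sum_(j < d) B i j = 1) /\
  (forall j, \sum_(i < d) B i j = 1).

Definition unitary (d : nat) (U : 'M[C]_d) : Prop :=
  U *m (map_mx Num.conj U)^T = 1%:M.

Definition unistochastic (d : nat) (B : 'M[C]_d) : Prop :=
  exists U : 'M[C]_d, unitary U /\ B = \matrix_(i, j) (`|U i j| ^+ 2).
End Defs.

(* Main.v *)
Require Import Defs.
From HB Require Import structures.
From mathcomp Require Import all_boot all_order all_algebra all_fingroup ring.
Import Order.TTheory GRing.Theory Num.Theory.
Local Open Scope ring_scope.
Set Implicit Arguments. Unset Strict Implicit. Unset Printing Implicit Defensive.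

Section S.
Variable C : numClosedFieldType.

Lemma colsum d (B : 'M[C]_d) (b : 'I_d -> C) : bistochastic B ->
  \sum_i \sum_j B i j * b j = \sum_j b j.
Proof.
move=> [_ [_ hc]]; rewrite exchange_big /=; apply: eq_bigr => j _.
by rewrite -mulr_suml hc mul1r.
Qed.

Lemma prefix_ineq d (B : 'M[C]_d) (b : 'I_d -> C) k : bistochastic B ->
  (forall i j : 'I_d, (i <= j)%N -> b j <= b i) ->
  \sum_(i < d | (i < k)%N) \sum_(j < d) B i j * b j <= \sum_(i < d | (i < k)%N) b i.
Proof.
move=> hB hb.
case: (leqP d k) => hk.
  rewrite (eq_bigl xpredT); last by move=> i; rewrite (leq_trans (ltn_ord i) hk).
  rewrite [X in _ <= X](eq_bigl xpredT); last by move=> i; rewrite (leq_trans (ltn_ord i) hk).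
  by rewrite colsum.
case: k hk => [|k] hk.
  by rewrite !big_pred0.
have [B0 [Br Bc]] := hB.
set p := b (Ordinal (ltnW hk)).
set ind := fun j : 'I_d => ((j < k.+1)%N)%:R : C.
set w := fun j : 'I_d => \sum_(i < d | (i < k.+1)%N) B i j.
have e1 : \sum_(i < d | (i < k.+1)%N) b i = \sum_j ind j * b j.
  rewrite big_mkcond; apply: eq_bigr => j _; rewrite /ind.
  by case: ifP => _; rewrite ?mul1r ?mul0r.
have e2 : \sum_(i < d | (i < k.+1)%N) \sum_(j < d) B i j * b j = \sum_j w j * b j.
  rewrite exchange_big /=; apply: eq_bigr => j _; by rewrite /w mulr_suml.
have e3 : \sum_j ind j = \sum_j w j.
  rewrite /w exchange_big /=; rewrite [RHS](eq_bigr (fun _ => 1)); last by move=> i _; rewrite Br.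
  rewrite [RHS]big_mkcond; apply: eq_bigr => jj _; rewrite /ind; by case: ifP.
rewrite -subr_ge0 e1 e2 -sumrB.
have -> : \sum_j (ind j * b j - w j * b j) = \sum_j (ind j - w j) * (b j - p).
  rewrite [RHS](eq_bigr (fun j => (ind j - w j) * b j - (ind j - w j) * p)); last by move=> j _; rewrite mulrBr.
  rewrite [RHS]sumrB -mulr_suml [\sum_(i < d) (ind i - w i)]sumrB e3 subrr mul0r subr0; apply: eq_bigr => j _; by rewrite mulrBl.
apply: sumr_ge0 => j _.
have w0 : 0 <= w j by apply: sumr_ge0 => i _.
have w1 : w j <= 1.
  rewrite -(Bc j) [X in _ <= X](bigID (fun i : 'I_d => (i < k.+1)%N)) /= lerDl.
  by apply: sumr_ge0.
rewrite /ind; case hj: (j < k.+1)%N; rewrite /=.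
  apply: mulr_ge0; first by rewrite subr_ge0.
  rewrite subr_ge0; apply: hb; exact: hj.
rewrite sub0r mulNr oppr_ge0 mulr_ge0_le0 //.
rewrite subr_le0; apply: hb => /=; by move: hj => /negbT; rewrite -leqNgt => /ltnW.
Qed.

Lemma abel n (a c : nat -> C) :
  (forall i j, (i <= j)%N -> (j < n)%N -> a j <= a i) ->
  (forall k, (k <= n)%N -> 0 <= \sum_(i < k) c i) ->
  forall m, (m <= n)%N -> a m.-1 * \sum_(i < m) c i <= \sum_(i < m) a i * c i.
Proof.
move=> ha hc; elim=> [|m IH] hm; first by rewrite !big_ord0 mulr0.
rewrite !big_ord_recr /= mulrDr.
apply: le_trans (_ : a m * \sum_(i < m) c i + a m * c m <= _).
  by [].
rewrite lerD2r; apply: le_trans (IH (ltnW hm)).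
rewrite ler_wpM2r //; first by apply: hc; apply: ltnW.
by apply: ha => //; apply: leq_pred.
Qed.

Lemma rearr d (B : 'M[C]_d) (a b : 'I_d -> C) : bistochastic B ->
  (forall i j : 'I_d, (i <= j)%N -> a j <= a i) ->
  (forall i j : 'I_d, (i <= j)%N -> b j <= b i) ->
  \sum_i a i * \sum_j B i j * b j <= \sum_i a i * b i.
Proof.
move=> hB ha hb.
case: d B a b hB ha hb => [|d] B a b hB ha hb; first by rewrite !big_ord0.
set A := fun n => a (inord n).
set Cn := fun n => b (inord n) - \sum_j B (inord n) j * b j.
have e : \sum_(i < d.+1) A i * Cn i = \sum_i a i * b i - \sum_i a i * \sum_j B i j * b j.
  rewrite -sumrB; apply: eq_bigr => i _; by rewrite /A /Cn inord_val mulrBr.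
have hpre : forall k, (k <= d.+1)%N -> \sum_(i < k) Cn i = 
   \sum_(i < d.+1 | (i < k)%N) b i - \sum_(i < d.+1 | (i < k)%N) \sum_j B i j * b j.
  move=> k hk; rewrite (big_ord_widen _ _ hk) -sumrB; apply: eq_bigr => i _.
  by rewrite /Cn inord_val.
have htot : \sum_(i < d.+1) Cn i = 0.
  have hT : forall F : 'I_d.+1 -> C, \sum_(i < d.+1 | (i < d.+1)%N) F i = \sum_i F i.
    by move=> F; apply: eq_bigl => i; rewrite ltn_ord.
  by rewrite hpre // !hT colsum // subrr.
rewrite -subr_ge0 -e.
have := abel (n := d.+1) (a := A) (c := Cn) _ _ (leqnn _).
rewrite htot mulr0; apply.
  move=> i j ij jn; rewrite /A; apply: ha; rewrite !inordK //; exact: leq_ltn_trans jn.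
move=> k hk; rewrite hpre // subr_ge0; exact: prefix_ineq.
Qed.
Lemma sortP d (u : 'cV[C]_d) (r : rel C) : real_vec u ->
  (forall x y, x \is Num.real -> y \is Num.real -> r x y || r y x) ->
  transitive r -> reflexive r ->
  exists p : 'S_d,
   (forall i : 'I_d, nth 0 (sort r [seq u j 0 | j <- enum 'I_d]) i = u (p i) 0) /\
   (forall i j : 'I_d, (i <= j)%N ->
      r (nth 0 (sort r [seq u j 0 | j <- enum 'I_d]) i)
        (nth 0 (sort r [seq u j 0 | j <- enum 'I_d]) j)).
Proof.
move=> ur rtot rtr rrf.
set s := [seq u j 0 | j <- enum 'I_d].
have hp : perm_eq (sort r s) [tuple u j 0 | j < d].
  by rewrite perm_sort /= /s.
have [p hpe] := tuple_permP hp.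
exists p; split.
  move=> i; rewrite hpe -(tnth_nth 0) !tnth_mktuple //.
have srt : sorted r (sort r s).
  apply: (sort_sorted_in (P := [pred x | x \is Num.real])).
    by move=> x y; rewrite !inE; apply: rtot.
  by apply/allP => x /mapP [j _ ->]; rewrite inE.
move=> i j ij; apply: (sorted_leq_nth rtr rrf 0 srt) => //;
  by rewrite inE size_sort size_map size_enum_ord.
Qed.


Lemma bist_perm d (B : 'M[C]_d) (p q : 'S_d) : bistochastic B ->
  bistochastic (\matrix_(i, j) B (p i) (q j)).
Proof.
move=> [h0 [hr hc]]; split; [|split].
- by move=> i j; rewrite mxE.
- move=> i; rewrite -(hr (p i)) [RHS](reindex_inj (@perm_inj _ q)); apply: eq_bigr => j _; by rewrite mxE.
- move=> j; rewrite -(hc (q j)) [RHS](reindex_inj (@perm_inj _ p)); apply: eq_bigr => i _; by rewrite mxE.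
Qed.

Lemma inner_perm d (B : 'M[C]_d) (u v : 'cV[C]_d) (p q : 'S_d) :
  inner u (B *m v) = \sum_i u (p i) 0 * \sum_j (\matrix_(i, j) B (p i) (q j)) i j * v (q j) 0.
Proof.
rewrite /inner (reindex_inj (@perm_inj _ p)); apply: eq_bigr => i _.
rewrite mxE (reindex_inj (@perm_inj _ q)); congr (_ * _); apply: eq_bigr => j _; by rewrite mxE.
Qed.

Lemma bist_bounds d (u v : 'cV[C]_d) (B : 'M[C]_d) : real_vec u -> real_vec v ->
  bistochastic B ->
  inner (vdown u) (vup v) <= inner u (B *m v) <= inner (vdown u) (vdown v).
Proof.
move=> ur vr hB.
have tot1 : forall x y : C, x \is Num.real -> y \is Num.real -> (y <= x) || (x <= y).
  by move=> x y xr yr; rewrite orbC; apply: real_leVge.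
have tot2 : forall x y : C, x \is Num.real -> y \is Num.real -> (x <= y) || (y <= x).
  by move=> x y xr yr; apply: real_leVge.
have tr1 : transitive (fun x y : C => y <= x) by move=> x y z /= h1 h2; apply: le_trans h2 h1.
have tr2 : transitive (fun x y : C => x <= y) by move=> x y z /=; apply: le_trans.
have [pu [pue pus]] := sortP ur tot1 tr1 (fun x => lexx x).
have [pv [pve pvs]] := sortP vr tot1 tr1 (fun x => lexx x).
have [pw [pwe pws]] := sortP vr tot2 tr2 (fun x => lexx x).
have pue' : forall i, vdown u i 0 = u (pu i) 0 by move=> i; rewrite mxE pue.
have pve' : forall i, vdown v i 0 = v (pv i) 0 by move=> i; rewrite mxE pve.
have pwe' : forall i, vup v i 0 = v (pw i) 0 by move=> i; rewrite mxE pwe.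
have pus' : forall i j : 'I_d, (i <= j)%N -> vdown u j 0 <= vdown u i 0
  by move=> i j ij; rewrite !mxE; exact: pus.
have pvs' : forall i j : 'I_d, (i <= j)%N -> vdown v j 0 <= vdown v i 0
  by move=> i j ij; rewrite !mxE; exact: pvs.
have pws' : forall i j : 'I_d, (i <= j)%N -> vup v i 0 <= vup v j 0
  by move=> i j ij; rewrite !mxE; exact: pws.
clear pue pve pwe pus pvs pws.
apply/andP; split.
- rewrite (inner_perm _ _ _ pu pw).
  have H := rearr (bist_perm pu pw hB) (a := fun i => vdown u i 0) (b := fun j => - vup v j 0)
    (fun i j ij => pus' i j ij) (fun i j ij => ltac:(rewrite lerN2; exact: pws' i j ij)).
  have eL : \sum_i vdown u i 0 * \sum_j (\matrix_(i, j) B (pu i) (pw j)) i j * - vup v j 0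
     = - \sum_i u (pu i) 0 * \sum_j (\matrix_(i, j) B (pu i) (pw j)) i j * v (pw j) 0.
    rewrite -sumrN; apply: eq_bigr => i _; rewrite -mulrN -sumrN pue'; congr (_ * _).
    apply: eq_bigr => j _; by rewrite mulrN pwe' mxE.
  have eR : \sum_i vdown u i 0 * - vup v i 0 = - \sum_i vdown u i 0 * vup v i 0.
    by rewrite -sumrN; apply: eq_bigr => i _; rewrite mulrN.
  by move: H; rewrite eL eR lerN2.
- rewrite (inner_perm _ _ _ pu pv).
  have H := rearr (bist_perm pu pv hB) (a := fun i => vdown u i 0) (b := fun j => vdown v j 0)
    (fun i j ij => pus' i j ij) (fun i j ij => pvs' i j ij).
  have eL : \sum_i vdown u i 0 * \sum_j (\matrix_(i, j) B (pu i) (pv j)) i j * vdown v j 0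
     = \sum_i u (pu i) 0 * \sum_j (\matrix_(i, j) B (pu i) (pv j)) i j * v (pv j) 0.
    apply: eq_bigr => i _; rewrite pue'; congr (_ * _).
    apply: eq_bigr => j _; by rewrite pve'.
  by move: H; rewrite eL.
Qed.

Lemma uni_bist d (B : 'M[C]_d) : unistochastic B -> bistochastic B.
Proof.
move=> [U [hU ->]]; split; [|split].
- by move=> i j; rewrite mxE exprn_ge0.
- move=> i; have := congr1 (fun M : 'M[C]_d => M i i) hU; rewrite /= !mxE eqxx /= mulr1n => <-.
  apply: eq_bigr => j _; by rewrite !mxE normCK.
- move=> j; have := congr1 (fun M : 'M[C]_d => M j j) (mulmx1C hU); rewrite /= !mxE eqxx /= mulr1n => <-.
  apply: eq_bigr => i _; by rewrite !mxE normCK mulrC.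
Qed.

Lemma sum_ind d (a : 'I_d) (F : 'I_d -> C) : \sum_k (k == a)%:R * F k = F a.
Proof.
rewrite (bigD1 a) //= eqxx mul1r big1 ?addr0 // => k /negPf ->; by rewrite mul0r.
Qed.

Section Givens.
Variables (d : nat) (a b : 'I_d) (t : C).
Hypotheses (ab : a != b) (t0 : 0 <= t) (t1 : t <= 1).

Let c := sqrtC (1 - t).
Let s := sqrtC t.
Let c0 : 0 <= c. Proof. by rewrite /c sqrtC_ge0 subr_ge0. Qed.
Let s0 : 0 <= s. Proof. by rewrite /s sqrtC_ge0. Qed.
Let cc : c * c = 1 - t. Proof. by rewrite -expr2 sqrtCK. Qed.
Let ss : s * s = t. Proof. by rewrite -expr2 sqrtCK. Qed.
Let ba : b != a. Proof. by rewrite eq_sym. Qed.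

Definition givens : 'M[C]_d := \matrix_(i, k)
  (if i == a then c * (k == a)%:R + s * (k == b)%:R
   else if i == b then c * (k == b)%:R + (- s) * (k == a)%:R
   else (k == i)%:R).

Lemma givens_a k : givens a k = c * (k == a)%:R + s * (k == b)%:R.
Proof. by rewrite mxE eqxx. Qed.
Lemma givens_b k : givens b k = c * (k == b)%:R + (- s) * (k == a)%:R.
Proof. by rewrite mxE (negPf ba) eqxx. Qed.
Lemma givens_o i k : i != a -> i != b -> givens i k = (k == i)%:R.
Proof. by move=> ia ib; rewrite mxE (negPf ia) (negPf ib). Qed.

Lemma sum2 (al be : C) (F : 'I_d -> C) :
  \sum_k (al * (k == a)%:R + be * (k == b)%:R) * F k = al * F a + be * F b.
Proof.
rewrite (eq_bigr (fun k => al * ((k == a)%:R * F k) + be * ((k == b)%:R * F k))).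
  by rewrite big_split /= -!mulr_sumr !sum_ind.
by move=> k _; rewrite mulrDl !mulrA.
Qed.

Lemma givens_unit : givens *m givens^T = 1%:M.
Proof.
apply/matrixP => i j; rewrite [LHS]mxE [RHS]mxE.
rewrite (eq_bigr (fun k => givens i k * givens j k)); last by move=> k _; rewrite [givens^T _ _]mxE.
have Ea : forall j, givens j a = if j == a then c else if j == b then - s else 0.
  move=> j'; case: (eqVneq j' a) => [->|ja]; first by rewrite givens_a eqxx (negPf ab) /=; ring.
  case: (eqVneq j' b) => [->|jb]; first by rewrite givens_b eqxx (negPf ab) /=; ring.
  by rewrite givens_o // eq_sym (negPf ja).
have Eb : forall j, givens j b = if j == a then s else if j == b then c else 0.
  move=> j'; case: (eqVneq j' a) => [->|ja]; first by rewrite givens_a eqxx (negPf ba) /=; ring.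
  case: (eqVneq j' b) => [->|jb]; first by rewrite givens_b eqxx (negPf ba) /=; ring.
  by rewrite givens_o // eq_sym (negPf jb).
case: (eqVneq i a) => [->|ia].
  rewrite (eq_bigr (fun k => (c * (k == a)%:R + s * (k == b)%:R) * givens j k)); last by move=> k _; rewrite givens_a.
  rewrite sum2 Ea Eb.
  case: (eqVneq j a) => [jE|ja]; first by subst j; rewrite ?eqxx ?(negPf ab) ?(negPf ba) ?cc ?ss /=; ring.
  case: (eqVneq j b) => [jE|jb]; first by subst j; rewrite ?eqxx ?(negPf ab) ?(negPf ba) /=; ring.
  by rewrite /=; ring.
case: (eqVneq i b) => [->|ib].
  rewrite (eq_bigr (fun k => ((- s) * (k == a)%:R + c * (k == b)%:R) * givens j k)); last by move=> k _; rewrite givens_b addrC.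
  rewrite sum2 Ea Eb.
  case: (eqVneq j a) => [jE|ja]; first by subst j; rewrite ?eqxx ?(negPf ab) ?(negPf ba) /=; ring.
  case: (eqVneq j b) => [jE|jb]; first by subst j; rewrite ?eqxx ?(negPf ab) ?(negPf ba) /= ?mulrNN ?cc ?ss; ring.
  by rewrite /=; ring.
rewrite (eq_bigr (fun k => (k == i)%:R * givens j k)); last by move=> k _; rewrite givens_o.
rewrite sum_ind.
case: (eqVneq j a) => [jE|ja]; first by subst j; rewrite givens_a (negPf ia) (negPf ib) /=; ring.
case: (eqVneq j b) => [jE|jb]; first by subst j; rewrite givens_b (negPf ia) (negPf ib) /=; ring.
by rewrite givens_o // eq_sym.
Qed.


Lemma givensE i j : givens i j =
  if i == a then (if j == a then c else if j == b then s else 0)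
  else if i == b then (if j == a then - s else if j == b then c else 0)
  else (i == j)%:R.
Proof.
rewrite mxE; case: (eqVneq i a) => [_|ia].
  case: (eqVneq j a) => [jE|ja]; rewrite ?jE; first by rewrite (negPf ab) /=; ring.
  by case: (eqVneq j b) => [jE|jb] /=; rewrite ?jE; ring.
case: (eqVneq i b) => [_|ib].
  case: (eqVneq j a) => [jE|ja]; rewrite ?jE; first by rewrite (negPf ab) /=; ring.
  by case: (eqVneq j b) => [jE|jb] /=; rewrite ?jE; ring.
by rewrite eq_sym.
Qed.

Lemma givens_real : map_mx Num.conj givens = givens.
Proof.
apply/matrixP => i j; rewrite [LHS]mxE !givensE.
have cr : c^* = c by apply: conj_Creal; apply: ger0_real.
have sr : s^* = s by apply: conj_Creal; apply: ger0_real.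
case: (i == a); case: (i == b); case: (j == a); case: (j == b);
  rewrite /= ?rmorphN ?cr ?sr ?rmorph0 ?rmorph_nat //.
all: by congr (- _); exact: sr.
Qed.

Definition gmat : 'M[C]_d := (1 - t)%:M + t *: perm_mx (tperm a b).

Lemma givens_norm : \matrix_(i, j) (`|givens i j| ^+ 2) = gmat.
Proof.
have nc : `|c| ^+ 2 = 1 - t by rewrite ger0_norm // expr2 cc.
have ns : `|s| ^+ 2 = t by rewrite ger0_norm // expr2 ss.
apply/matrixP => i j; rewrite [LHS]mxE givensE /gmat !mxE.
case: (eqVneq i a) => [iE|ia]; rewrite ?iE.
  rewrite tpermL; case: (eqVneq j a) => [jE|ja]; rewrite ?jE; first by rewrite (negPf ba) nc /=; ring.
  case: (eqVneq j b) => [jE|jb]; rewrite ?jE; first by rewrite ns /=; ring.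
  by rewrite normr0 /=; ring.
case: (eqVneq i b) => [iE|ib]; rewrite ?iE.
  rewrite tpermR; case: (eqVneq j a) => [jE|ja]; rewrite ?jE; first by rewrite (negPf ba) normrN ns /=; ring.
  case: (eqVneq j b) => [jE|jb]; rewrite ?jE; first by rewrite nc /=; ring.
  by rewrite normr0 /=; ring.
rewrite tpermD // 1?eq_sym //.
by case: (eqVneq i j) => _; rewrite /= ?normr1 ?normr0 /=; ring.
Qed.

Lemma givens_uni (sg : 'S_d) : unistochastic (gmat *m perm_mx sg).
Proof.
exists (givens *m perm_mx sg); split.
  rewrite /unitary map_mxM map_perm_mx givens_real trmx_mul tr_perm_mx.
  by rewrite mulmxA -(mulmxA givens) -perm_mxM mulgV perm_mx1 mulmx1 givens_unit.
rewrite -givens_norm -(invgK sg) -!col_permE; apply/matrixP => i j; by rewrite !mxE.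
Qed.

End Givens.

Definition q d (u v : 'cV[C]_d) (p : 'S_d) := \sum_i u i 0 * v (p i) 0.

Lemma perm_mx_v d (v : 'cV[C]_d) (p : 'S_d) i : (perm_mx p *m v) i 0 = v (p i) 0.
Proof. by rewrite -row_permE mxE. Qed.

Lemma inner_perm_mx d (u v : 'cV[C]_d) (p : 'S_d) : inner u (perm_mx p *m v) = q u v p.
Proof. by apply: eq_bigr => i _; rewrite perm_mx_v. Qed.

Lemma gmat_val d (u v : 'cV[C]_d) a b t (sg : 'S_d) :
  inner u ((gmat a b t *m perm_mx sg) *m v) = (1 - t) * q u v sg + t * q u v (tperm a b * sg).
Proof.
have -> : (gmat a b t *m perm_mx sg) *m v =
   (1 - t) *: (perm_mx sg *m v) + t *: (perm_mx (tperm a b * sg) *m v).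
  rewrite /gmat !mulmxDl mul_scalar_mx -!scalemxAl perm_mxM //.
rewrite /inner /q !mulr_sumr -big_split /=; apply: eq_bigr => i _.
rewrite mxE [X in _ * (X + _) = _]mxE [X in _ * (_ + X) = _]mxE !perm_mx_v; ring.
Qed.

Lemma perm_uni d (p : 'S_d) : unistochastic (perm_mx p : 'M[C]_d).
Proof.
exists (perm_mx p); split.
  by rewrite /unitary map_perm_mx tr_perm_mx -perm_mxM mulgV perm_mx1.
apply/matrixP => i j; rewrite !mxE.
by case: (p i == j); rewrite /= ?normr1 ?normr0 ?expr1n ?expr0n.
Qed.

Lemma q_real d (u v : 'cV[C]_d) p : real_vec u -> real_vec v -> q u v p \is Num.real.
Proof. by move=> ur vr; apply: rpred_sum => i _; apply: rpredM. Qed.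

Definition btw (al x be : C) := (al <= x <= be) || (be <= x <= al).

Lemma btw_real al x be : al \is Num.real -> be \is Num.real -> btw al x be -> x \is Num.real.
Proof.
move=> ar br /orP [/andP [h _]|/andP [h _]].
  by rewrite -(subrK al x) rpredD // ger0_real // subr_ge0.
by rewrite -(subrK be x) rpredD // ger0_real // subr_ge0.
Qed.

Lemma btw_split al x m be : x \is Num.real -> m \is Num.real ->
  btw al x be -> btw al x m \/ btw m x be.
Proof.
move=> xr mr /orP [/andP [h1 h2]|/andP [h1 h2]]; case/orP: (real_leVge xr mr) => hm.
- by left; rewrite /btw h1 hm.
- by right; rewrite /btw hm h2.
- by right; rewrite /btw h1 hm orbT.
- by left; rewrite /btw hm h2 orbT.
Qed.

Lemma interp (al be x : C) : btw al x be -> exists t, [/\ 0 <= t, t <= 1 & x = (1 - t) * al + t * be].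
Proof.
case: (eqVneq al be) => [<-|ne].
  move=> h; exists 0; split; [exact: lexx|exact: ler01|].
  have -> : x = al by apply/le_anti; case/orP: h => /andP [h1 h2]; rewrite h1 h2.
  by ring.
have nz : be - al != 0 by rewrite subr_eq0 eq_sym.
move=> h; exists ((x - al) / (be - al)); split.
- case/orP: h => /andP [h1 h2].
    by rewrite divr_ge0 // subr_ge0 ?(le_trans h1 h2).
  rewrite -mulrNN -invrN !opprB divr_ge0 // subr_ge0 //; exact: le_trans h1 h2.
- case/orP: h => /andP [h1 h2].
    have lt : 0 < be - al by rewrite lt_def nz subr_ge0 (le_trans h1 h2).
    by rewrite ler_pdivrMr // mul1r lerD2r.
  have lt : 0 < al - be by rewrite lt_def -oppr_eq0 opprB nz subr_ge0 (le_trans h1 h2).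
  by rewrite -mulrNN -invrN !opprB ler_pdivrMr // mul1r lerD2l lerN2.
- by field.
Qed.

Lemma chain d (u v : 'cV[C]_d) : real_vec u -> real_vec v ->
  forall ts : seq ('I_d * 'I_d), all dpair ts -> forall (s0 : 'S_d) x,
  btw (q u v s0) x (q u v ((\prod_(t <- ts) tperm t.1 t.2)%g * s0)) ->
  exists B : 'M[C]_d, unistochastic B /\ x = inner u (B *m v).
Proof.
move=> ur vr; elim=> [|[a b] ts IH] /=.
  move=> _ s0 x; rewrite big_nil mul1g => h.
  exists (perm_mx s0); split; first exact: perm_uni.
  rewrite inner_perm_mx; apply/le_anti; case/orP: h => /andP [h1 h2]; by rewrite h1 h2.
move=> /andP [ab hts] s0 x; rewrite big_cons /= -mulgA => h.
have xr : x \is Num.real := btw_real (q_real _ ur vr) (q_real _ ur vr) h.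
case: (btw_split xr (q_real ((\prod_(t <- ts) tperm t.1 t.2)%g * s0) ur vr) h) => h'.
  exact: IH h'.
have [t [t0 t1 ->]] := interp h'.
exists (gmat a b t *m perm_mx ((\prod_(t <- ts) tperm t.1 t.2)%g * s0)); split.
  exact: givens_uni.
by rewrite gmat_val.
Qed.

Lemma interval_uni d (u v : 'cV[C]_d) : real_vec u -> real_vec v -> forall x,
  inner (vdown u) (vup v) <= x <= inner (vdown u) (vdown v) ->
  exists B : 'M[C]_d, unistochastic B /\ x = inner u (B *m v).
Proof.
move=> ur vr x hx.
have tot1 : forall x y : C, x \is Num.real -> y \is Num.real -> (y <= x) || (x <= y).
  by move=> x' y xr yr; rewrite orbC; apply: real_leVge.
have tot2 : forall x y : C, x \is Num.real -> y \is Num.real -> (x <= y) || (y <= x).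
  by move=> x' y xr yr; apply: real_leVge.
have tr1 : transitive (fun x y : C => y <= x) by move=> x' y z /= h1 h2; apply: le_trans h2 h1.
have tr2 : transitive (fun x y : C => x <= y) by move=> x' y z /=; apply: le_trans.
have [pu [pue _]] := sortP ur tot1 tr1 (fun x => lexx x).
have [pv [pve _]] := sortP vr tot1 tr1 (fun x => lexx x).
have [pw [pwe _]] := sortP vr tot2 tr2 (fun x => lexx x).
have pue' : forall i, vdown u i 0 = u (pu i) 0 by move=> i; rewrite mxE pue.
have pve' : forall i, vdown v i 0 = v (pv i) 0 by move=> i; rewrite mxE pve.
have pwe' : forall i, vup v i 0 = v (pw i) 0 by move=> i; rewrite mxE pwe.
set smin := (pu^-1 * pw)%g; set smax := (pu^-1 * pv)%g.
have emin : q u v smin = inner (vdown u) (vup v).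
  rewrite /q /inner (reindex_inj (@perm_inj _ pu)); apply: eq_bigr => i _.
  by rewrite pue' pwe' permM permK.
have emax : q u v smax = inner (vdown u) (vdown v).
  rewrite /q /inner (reindex_inj (@perm_inj _ pu)); apply: eq_bigr => i _.
  by rewrite pue' pve' permM permK.
have [ts hts hd] := prod_tpermP (smax * smin^-1)%g.
apply: (chain ur vr hd (s0 := smin)).
by rewrite -hts -mulgA mulVg mulg1 emin emax /btw hx.
Qed.
End S.


Theorem mainTheorem3 (C : numClosedFieldType) (d : nat) (u v : 'cV[C]_d) :
  real_vec u -> real_vec v ->
  (forall x : C,
     (exists B : 'M[C]_d, unistochastic B /\ x = inner u (B *m v)) <->
     (exists B : 'M[C]_d, bistochastic B /\ x = inner u (B *m v))) /\
  (forall x : C,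
     (exists B : 'M[C]_d, bistochastic B /\ x = inner u (B *m v)) <->
     (inner (vdown u) (vup v) <= x <= inner (vdown u) (vdown v))).
Proof.
move=> ur vr; split=> x; split.
- by move=> [B [hB ->]]; exists B; split => //; exact: uni_bist.
- move=> [B [hB ->]]; apply: interval_uni => //; exact: bist_bounds.
- by move=> [B [hB ->]]; exact: bist_bounds.
- move=> hx; have [B [hB ->]] := interval_uni ur vr hx.
  by exists B; split => //; exact: uni_bist.
Qed.
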